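(* Let $T\in\mathcal{T}$, let $v_1,v_2\in A_T$ with $N_T(v_1)=\{u_1,u_2,u_5\}$ and $N_T(v_2)=\{u_3,u_4,u_5\}$, and let $T'$ arise from $T$ by contracting all six edges incident with $v_1$ or $v_2$ into a single new vertex $w$. Then $T'\in\mathcal{T}$, $D_{T'}=\{w\}\cup (D_T\setminus (N_T(v_1)\cup N_T(v_2)))$, and $A_{T'}=A_T\setminus\{v_1,v_2\}$.
   Context: Gallai–Edmonds sets: for a graph $G$, $D_G$ is the set of vertices not covered by at least one maximum matching, $A_G=N_G(D_G)\setminus D_G$, $C_G=V(G)\setminus(A_G\cup D_G)$. $\nu$ denotes the matching number, $n(T)$ the number of vertices. $\mathcal{T}$ is the set of all trees $T$ such that every vertex of $A_T$ has degree at most $3$ in $T$ and $\nu(T)=\frac{n(T)-1}{3}$. *)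

(* Defs.v *)
From HB Require Import structures.
From mathcomp Require Import all_boot.
Set Implicit Arguments. Unset Strict Implicit. Unset Printing Implicit Defensive.

Section Graphs.
Variables (T : finType) (e : rel T).

Definition nbhd (x : T) : {set T} := [set y | e x y].
Definition nbhdS (S : {set T}) : {set T} := [set y | [exists x in S, e x y]].
Definition deg (x : T) : nat := #|nbhd x|.

Definition is_tree : Prop :=
  [/\ symmetric e, irreflexive e, 0 < #|T|,
      (forall x y, connect e x y) &
      ~ (exists c : seq T, [&& uniq c, 2 < size c & cycle e c])].

Definition matching (M : {set {set T}}) : bool :=
  [forall E in M, [exists x, exists y, e x y && (E == [set x; y])]] && trivIset M.

Definition nu : nat := \max_(M : {set {set T}} | matching M) #|M|.

Definition max_matching (M : {set {set T}}) : bool := matching M && (#|M| == nu).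

Definition GE_D : {set T} :=
  [set x | [exists M, max_matching M && (x \notin cover M)]].
Definition GE_A : {set T} := nbhdS GE_D :\: GE_D.
Definition GE_C : {set T} := ~: (GE_A :|: GE_D).

Definition in_TT : Prop :=
  [/\ is_tree, (forall v, v \in GE_A -> deg v <= 3) & 3 * nu = #|T| - 1].

End Graphs.

(* contraction of a vertex set X into a single new vertex w = None;
   the remaining vertices are Some x with x \notin X. *)
Definition contr_vert (T : finType) (X : {set T}) : finType :=
  option {x : T | x \notin X}.

Definition contr_proj (T : finType) (X : {set T}) (x : T) : contr_vert X :=
  insub x.

Definition contr_rel (T : finType) (e : rel T) (X : {set T}) : rel (contr_vert X) :=
  fun a b => (a != b) &&
    [exists x, exists y, [&& e x y, contr_proj X x == a & contr_proj X y == b]].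
Arguments contr_proj {T} X x.
Arguments contr_rel {T} e X.

(* Main.v *)
Require Import Defs.
From HB Require Import structures.
From mathcomp Require Import all_boot zify.
Set Implicit Arguments. Unset Strict Implicit. Unset Printing Implicit Defensive.

Module P1.
Set Implicit Arguments. Unset Strict Implicit. Unset Printing Implicit Defensive.

Section Basic.
Variables (T : finType) (e : rel T).
Hypothesis esym : symmetric e.
Hypothesis eirr : irreflexive e.
Implicit Types (S U W : {set T}).

Definition eS (S : {set T}) : rel T := fun x y => [&& x \in S, y \in S & e x y].

Lemma eS_sub S : subrel (eS S) e.
Proof. by move=> x y /and3P[]. Qed.

Lemma eS_sym S : symmetric (eS S).
Proof. by move=> x y; rewrite /eS esym andbCA. Qed.

Lemma eS_csym S x y : connect (eS S) x y = connect (eS S) y x.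
Proof. by apply: sym_connect_sym; apply: eS_sym. Qed.

Lemma eS_mono (S S' : {set T}) : S \subset S' -> subrel (eS S) (eS S').
Proof.
by move=> /subsetP sS x y /and3P[xS yS exy]; rewrite /eS (sS _ xS) (sS _ yS).
Qed.

Lemma connect_mono (S S' : {set T}) x y : S \subset S' -> connect (eS S) x y -> connect (eS S') x y.
Proof.
move=> sS; apply: connect_sub => u v h; apply: connect1; exact: eS_mono h.
Qed.

Lemma path_eS_all S x p : path (eS S) x p -> all (mem S) p.
Proof.
by elim: p x => //= y p IH x /andP[/and3P[_ yS _] /IH ->]; rewrite yS.
Qed.

Lemma path_eS_intro S x p : x \in S -> path e x p -> all (mem S) p -> path (eS S) x p.
Proof.
elim: p x => //= y p IH x xS /andP[exy pp] /andP[yS aS].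
by rewrite /eS xS yS exy /= IH.
Qed.

Lemma connect_eS_in S x y : x \in S -> connect (eS S) x y -> y \in S.
Proof.
move=> xS /connectP[p pp ->]; have := path_eS_all pp.
case: (lastP p) => //= q z; rewrite all_rcons last_rcons => /andP[] //.
Qed.

Lemma upathP S x y : connect (eS S) x y ->
  exists p, [/\ path (eS S) x p, uniq (x :: p) & last x p = y].
Proof.
move=> /connectP[p pp ->]; case: (shortenP pp) => p' pp' up' _.
by exists p'.
Qed.

Lemma path_connect S x p : path (eS S) x p -> connect (eS S) x (last x p).
Proof. by move=> pp; apply/connectP; exists p. Qed.

Hypothesis acyc : ~ (exists c : seq T, [&& uniq c, 2 < size c & cycle e c]).

Lemma uniq_cat_disj U W a b : [disjoint U & W] -> all (mem U) a -> all (mem W) b ->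
  uniq a -> uniq b -> uniq (a ++ b).
Proof.
move=> dUW /allP aU /allP bW ua ub; rewrite cat_uniq ua ub andbT /=.
apply/hasPn => z zb; apply/negP => za.
by have := disjointFr dUW (aU _ za); rewrite (bW _ zb : z \in W).
Qed.

Lemma GL U W p q x y :
  [disjoint U & W] -> q \in U -> x \in W ->
  connect (eS U) q p -> connect (eS W) x y -> e p x -> e y q -> p = q /\ x = y.
Proof.
move=> dUW qU xW /upathP[s1 [ps1 us1 ls1]] /upathP[s2 [ps2 us2 ls2]] epx eyq.
have a1 : all (mem U) (q :: s1) by rewrite /= qU (path_eS_all ps1).
have a2 : all (mem W) (x :: s2) by rewrite /= xW (path_eS_all ps2).
have uc := uniq_cat_disj dUW a1 a2 us1 us2.
have cc : cycle e ((q :: s1) ++ x :: s2).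
  rewrite /= rcons_cat cat_path (sub_path (@eS_sub _) ps1) /= ls1 epx /=.
  by rewrite rcons_path (sub_path (@eS_sub _) ps2) ls2 eyq.
case: s1 ps1 us1 ls1 a1 uc cc => [|z1 s1] ps1 us1 ls1 a1 uc cc;
case: s2 ps2 us2 ls2 a2 uc cc => [|z2 s2] ps2 us2 ls2 a2 uc cc; try by subst.
all: exfalso; apply: acyc; eexists; apply/and3P; split; [exact: uc| |exact: cc].
all: by rewrite size_cat /= ?addnS.
Qed.

Lemma TL a x y : e a x -> e a y -> x != y -> ~~ connect (eS (~: [set a])) x y.
Proof.
move=> eax eay nxy; apply/negP => cxy.
have aa : a \in [set a] by rewrite set11.
have dj : [disjoint [set a] & ~: [set a]] by rewrite disjoints1 in_setC set11.
have xa : x \in ~: [set a].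
  rewrite in_setC in_set1; apply/eqP => xa; by move: eax; rewrite xa eirr.
have exa : e a x by [].
have eya : e y a by rewrite esym.
have [_ exy] := GL dj aa xa (connect0 _ _) cxy exa eya.
by move: nxy; rewrite exy eqxx.
Qed.

End Basic.

End P1.
Import P1.

Module P2.
Set Implicit Arguments. Unset Strict Implicit. Unset Printing Implicit Defensive.

Section Match.
Variables (T : finType) (e : rel T).
Hypothesis esym : symmetric e.
Hypothesis eirr : irreflexive e.
Implicit Types (S U W : {set T}) (M : {set {set T}}).

Lemma matchingP M : matching e M ->
  (forall E, E \in M -> exists x y, e x y /\ E = [set x; y]) /\ trivIset M.
Proof.
move=> /andP[/forall_inP h tM]; split => // E /h /existsP[x /existsP[y /andP[exy /eqP ->]]].
by exists x, y.
Qed.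

Lemma matching_intro M :
  (forall E, E \in M -> exists x y, e x y /\ E = [set x; y]) -> trivIset M -> matching e M.
Proof.
move=> h tM; rewrite /matching tM andbT; apply/forall_inP => E /h [x [y [exy ->]]].
by apply/existsP; exists x; apply/existsP; exists y; rewrite exy eqxx.
Qed.

Lemma matching_sub M M' : M' \subset M -> matching e M -> matching e M'.
Proof.
move=> sM /matchingP[h tM]; apply: matching_intro; last exact: trivIsetS sM tM.
by move=> E /(subsetP sM) /h.
Qed.

Lemma matching0 : matching e set0.
Proof. by apply: matching_intro => [E|]; rewrite ?inE // /trivIset /cover !big_set0 cards0. Qed.

Lemma blockP M E : matching e M -> E \in M -> exists x y, [/\ e x y, x != y & E = [set x; y]].
Proof.
move=> /matchingP[h _] /h [x [y [exy ->]]]; exists x, y; split => //.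
by apply/eqP => xy; move: exy; rewrite xy eirr.
Qed.

Lemma block_n0 M E : matching e M -> E \in M -> E != set0.
Proof.
move=> mM /(blockP mM) [x [y [_ _ ->]]]; apply/set0Pn; exists x; by rewrite !inE eqxx.
Qed.

Lemma matchingU M1 M2 : matching e M1 -> matching e M2 ->
  [disjoint cover M1 & cover M2] -> matching e (M1 :|: M2).
Proof.
move=> m1 m2 d; have [h1 t1] := matchingP m1; have [h2 t2] := matchingP m2.
apply: matching_intro; last exact: trivIsetU.
by move=> E /setUP[/h1|/h2].
Qed.

Lemma cardMU M1 M2 : matching e M1 -> matching e M2 ->
  [disjoint cover M1 & cover M2] -> #|M1 :|: M2| = #|M1| + #|M2|.
Proof.
move=> m1 m2 d; apply/eqP; have [_ ->] := leq_card_setU M1 M2.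
apply/pred0P => E /=; apply/negP => /andP[E1 E2].
have /set0Pn [x xE] := block_n0 m1 E1.
have x1 : x \in cover M1 by apply/bigcupP; exists E.
have x2 : x \in cover M2 by apply/bigcupP; exists E.
by have := disjointFr d x1; rewrite x2.
Qed.

Lemma matching1 x y : e x y -> matching e [set [set x; y]].
Proof.
move=> exy; apply: matching_intro; last exact: trivIset1.
by move=> E; rewrite inE => /eqP ->; exists x, y.
Qed.

Lemma cover2 M x y : [set x; y] \in M -> x \in cover M /\ y \in cover M.
Proof. by move=> h; split; apply/bigcupP; exists [set x; y]; rewrite // !inE eqxx ?orbT. Qed.

Definition matchIn S M := matching e M && (cover M \subset S).
Definition nuS S := \max_(M | matchIn S M) #|M|.
Definition inD S x := (x \in S) && (nuS (S :\ x) == nuS S).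

Lemma matchIn0 S : matchIn S set0.
Proof. by rewrite /matchIn matching0 /cover big_set0 sub0set. Qed.

Lemma nuS_ge S M : matchIn S M -> #|M| <= nuS S.
Proof. by move=> h; apply: leq_bigmax_cond. Qed.

Lemma nuS_wit S : exists M, matchIn S M /\ #|M| = nuS S.
Proof.
exists [arg max_(M > set0 | matchIn S M) #|M|].
case: arg_maxnP; first exact: matchIn0.
move=> M mM maxM; split => //; apply/eqP; rewrite eqn_leq nuS_ge //.
by apply/bigmax_leqP.
Qed.

Lemma nuS_le S n : (forall M, matchIn S M -> #|M| <= n) -> nuS S <= n.
Proof. by move=> h; apply/bigmax_leqP. Qed.

Lemma matchIn_mono S S' M : S \subset S' -> matchIn S M -> matchIn S' M.
Proof. by move=> sS /andP[m c]; rewrite /matchIn m (subset_trans c sS). Qed.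

Lemma nuS_mono S S' : S \subset S' -> nuS S <= nuS S'.
Proof. by move=> sS; apply: nuS_le => M /(matchIn_mono sS) /nuS_ge. Qed.

Lemma matchIn_sub S M M' : M' \subset M -> matchIn S M -> matchIn S M'.
Proof.
move=> sM /andP[m c]; rewrite /matchIn (matching_sub sM m) /=.
apply: subset_trans c; apply/subsetP => x /bigcupP[E EM xE]; apply/bigcupP.
by exists E => //; apply: (subsetP sM).
Qed.

Lemma cover_del M E : trivIset M -> E \in M -> cover (M :\ E) = cover M :\: E.
Proof. by move=> t EM; apply: coverD1. Qed.

Lemma nuS_del S x : nuS S <= (nuS (S :\ x)).+1.
Proof.
have [M [mM <-]] := nuS_wit S.
case: (boolP (x \in cover M)) => [/bigcupP[E EM xE] | nx].
  have [m c] := andP mM; have [_ t] := matchingP m.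
  rewrite (cardsD1 E) EM add1n ltnS; apply: nuS_ge.
  rewrite /matchIn (matching_sub (subsetDl _ _) m) /= cover_del //.
  apply/subsetP => z /setDP[zc zE]; rewrite !inE (subsetP c _ zc) andbT.
  by apply: contraNneq zE => ->.
apply: leqW; apply: nuS_ge; have [m c] := andP mM; rewrite /matchIn m /=.
apply/subsetP => z zc; rewrite !inE (subsetP c _ zc) andbT.
by apply: contraNneq nx => <-.
Qed.

Lemma nuS_del_le S x : nuS (S :\ x) <= nuS S.
Proof. apply: nuS_mono; exact: subsetDl. Qed.

Lemma inD_notin S x : x \in S -> ~~ inD S x -> (nuS (S :\ x)).+1 = nuS S.
Proof.
move=> xS; rewrite /inD xS /= => ne; apply/eqP; rewrite eqn_leq nuS_del andbT.
by rewrite ltn_neqAle ne nuS_del_le.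
Qed.

Lemma split_le S1 S2 M : matchIn (S1 :|: S2) M ->
  (forall z w, z \in S1 -> w \in S2 -> e z w -> [set z; w] \in M -> False) ->
  #|M| <= nuS S1 + nuS S2.
Proof.
move=> mM nc; have [m c] := andP mM.
set M1 := [set E in M | E \subset S1]; set M2 := [set E in M | E \subset S2].
have sM : M \subset M1 :|: M2.
  apply/subsetP => E EM; have [x [y [exy _ Exy]]] := blockP m EM.
  have xc : x \in cover M by apply/bigcupP; exists E; rewrite // Exy !inE eqxx.
  have yc : y \in cover M by apply/bigcupP; exists E; rewrite // Exy !inE eqxx ?orbT.
  have := subsetP c _ xc; have := subsetP c _ yc; rewrite !inE EM /= Exy !subUset !sub1set.
  case/orP => yS; case/orP => xS; rewrite ?xS ?yS ?orbT //.
  - by case: (nc _ _ yS xS); [rewrite esym | rewrite setUC -Exy].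
  - by case: (nc _ _ xS yS); rewrite // -Exy.
apply: leq_trans (subset_leq_card sM) _; apply: leq_trans (leq_card_setU _ _) _.
apply: leq_add; apply: nuS_ge; apply/andP; split.
- by apply: matching_sub m; apply/subsetP => E; rewrite inE => /andP[].
- by apply/subsetP => x /bigcupP[E]; rewrite inE => /andP[_ /subsetP h] /h.
- by apply: matching_sub m; apply/subsetP => E; rewrite inE => /andP[].
- by apply/subsetP => x /bigcupP[E]; rewrite inE => /andP[_ /subsetP h] /h.
Qed.

Lemma union_ge S1 S2 : [disjoint S1 & S2] -> nuS S1 + nuS S2 <= nuS (S1 :|: S2).
Proof.
move=> d; have [M1 [/andP[m1 c1] <-]] := nuS_wit S1.
have [M2 [/andP[m2 c2] <-]] := nuS_wit S2.
have dc : [disjoint cover M1 & cover M2].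
  by apply: disjointWl c1 _; apply: disjointWr c2 _.
rewrite -cardMU //; apply: nuS_ge; rewrite /matchIn matchingU //=.
rewrite /cover bigcup_setU -!/(cover _); exact: setUSS.
Qed.

Lemma nuS_split S1 S2 : [disjoint S1 & S2] ->
  (forall z w, z \in S1 -> w \in S2 -> ~~ e z w) ->
  nuS (S1 :|: S2) = nuS S1 + nuS S2.
Proof.
move=> d nc; apply/eqP; rewrite eqn_leq union_ge // andbT.
have [M [mM <-]] := nuS_wit (S1 :|: S2); apply: split_le => // z w zS wS.
by rewrite (negbTE (nc _ _ zS wS)).
Qed.

Definition bridge S1 S2 x y := [/\ [disjoint S1 & S2], x \in S1, y \in S2, e x y &
  forall z w, z \in S1 -> w \in S2 -> e z w -> z = x /\ w = y].

Lemma bridge_sym S1 S2 x y : bridge S1 S2 x y -> bridge S2 S1 y x.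
Proof.
case=> d xS yS exy h; split => //; first by rewrite disjoint_sym.
- by rewrite esym.
- move=> z w zS wS ezw; have ewz : e w z by rewrite esym.
  by have [-> ->] := h _ _ wS zS ewz.
Qed.

Lemma bridge_M S1 S2 x y M : bridge S1 S2 x y -> matchIn (S1 :|: S2) M ->
  [set x; y] \in M -> #|M| <= (nuS (S1 :\ x) + nuS (S2 :\ y)).+1.
Proof.
case=> d xS yS exy h mM xyM; have [m c] := andP mM; have [_ t] := matchingP m.
rewrite (cardsD1 [set x; y]) xyM add1n ltnS; apply: split_le.
- rewrite /matchIn (matching_sub (subsetDl _ _) m) /= cover_del //.
  apply/subsetP => z /setDP[zc zxy]; have := subsetP c _ zc.
  rewrite !inE; move: zxy; rewrite !inE negb_or => /andP[-> ->] /=; by [].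
- move=> z w /setD1P[zx zS] /setD1P[wy wS] ezw _.
  by have [zx' _] := h _ _ zS wS ezw; move: zx; rewrite zx' eqxx.
Qed.

End Match.

End P2.
Import P2.

Module P3.
Set Implicit Arguments. Unset Strict Implicit. Unset Printing Implicit Defensive.

Section Match2.
Variables (T : finType) (e : rel T).
Hypothesis esym : symmetric e.
Hypothesis eirr : irreflexive e.
Implicit Types (S U W : {set T}) (M : {set {set T}}).
Local Notation nuS := (nuS e).
Local Notation inD := (inD e).
Local Notation matchIn := (matchIn e).
Local Notation bridge := (bridge e).

Lemma bridge_nu S1 S2 x y : bridge S1 S2 x y ->
  nuS (S1 :|: S2) = nuS S1 + nuS S2 + (inD S1 x && inD S2 y).
Proof.
move=> B; have [d xS yS exy h] := B.
apply/eqP; rewrite eqn_leq; apply/andP; split.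
  have [M [mM <-]] := nuS_wit e (S1 :|: S2).
  case: (boolP ([set x; y] \in M)) => xyM.
    have := bridge_M esym eirr B mM xyM.
    case: (boolP (inD S1 x)) => d1; case: (boolP (inD S2 y)) => d2 /=.
    - by rewrite (eqP (andP d1).2) (eqP (andP d2).2) addn1.
    - by rewrite -(inD_notin yS d2) (eqP (andP d1).2) addnS addn0.
    - rewrite -(inD_notin xS d1) addSn addn0 => /leq_trans; apply. 
      by rewrite ltnS leq_add2l nuS_del_le.
    - rewrite -(inD_notin xS d1) -(inD_notin yS d2) addn0 addSn addnS => /leq_trans; apply.
      by rewrite leqW.
  rewrite addnC; apply: leq_trans (leq_addl _ _); apply: (split_le esym eirr mM) => z w zS wS ezw.
  by have [-> ->] := h _ _ zS wS ezw; rewrite (negbTE xyM).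
case: (boolP (inD S1 x)) => d1; case: (boolP (inD S2 y)) => d2 /=;
  rewrite ?addn0; try exact: union_ge.
have [M1 [/andP[m1 c1] e1]] := nuS_wit e (S1 :\ x).
have [M2 [/andP[m2 c2] e2]] := nuS_wit e (S2 :\ y).
have dc : [disjoint cover M1 & cover M2].
  apply: disjointWl c1 _; apply: disjointWr c2 _.
  by apply: disjointWl (subsetDl _ _) _; apply: disjointWr (subsetDl _ _) _.
have m12 := matchingU m1 m2 dc.
have c12 : cover (M1 :|: M2) \subset (S1 :\ x) :|: (S2 :\ y).
  by rewrite /cover bigcup_setU -!/(cover _); exact: setUSS.
have dxy : [disjoint cover [set [set x; y]] & cover (M1 :|: M2)].
  rewrite cover1; apply: disjointWr c12 _.
  rewrite disjoints_subset; apply/subsetP => z; rewrite !inE => /orP[] /eqP -> /=.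
  - by rewrite eqxx /= (disjointFr d xS) andbF.
  - by rewrite eqxx /= (disjointFl d yS) andbF.
have m3 := matchingU (matching1 exy) m12 dxy.
have := nuS_ge (e := e) (S := S1 :|: S2) (M := [set [set x; y]] :|: (M1 :|: M2)).
rewrite (cardMU eirr (matching1 exy) m12 dxy) cards1 (cardMU eirr m1 m2 dc) e1 e2 (eqP (andP d1).2) (eqP (andP d2).2).
rewrite add1n addn1; apply; rewrite /matchIn m3 /=.
rewrite /cover bigcup_setU -!/(cover _) cover1; apply/subsetP => z; rewrite !inE.
case/orP => [/orP[]/eqP->|]; rewrite ?xS ?yS ?orbT //.
by move=> /(subsetP c12); rewrite !inE => /orP[] /andP[_ ->]; rewrite ?orbT.
Qed.
Lemma bridge_inD S1 S2 x y : bridge S1 S2 x y ->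
  inD (S1 :|: S2) x = inD S1 x && ~~ inD S2 y.
Proof.
move=> B; have [d xS yS exy h] := B.
have E : (S1 :|: S2) :\ x = (S1 :\ x) :|: S2.
  apply/setP => z; rewrite !inE; case: (eqVneq z x) => [->|] //=.
  by rewrite (disjointFr d xS).
have nx : nuS ((S1 :|: S2) :\ x) = nuS (S1 :\ x) + nuS S2.
  rewrite E nuS_split //.
  - by apply: disjointWl (subsetDl _ _) _.
  - move=> z w /setD1P[zx zS] wS; apply/negP => ezw.
    by have [zx' _] := h _ _ zS wS ezw; move: zx; rewrite zx' eqxx.
rewrite {1}/inD inE xS /= nx (bridge_nu B).
case: (boolP (inD S1 x)) => d1 /=.
  rewrite (eqP (andP d1).2); case: (inD S2 y) => /=.
    apply/negbTE; rewrite addn1 -addSn; lia.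
  by rewrite addn0 eqxx.
rewrite -(inD_notin xS d1) addSn; apply/negbTE.
by case: (inD S2 y) => /=; lia.
Qed.

End Match2.

End P3.
Import P3.

Module P4.
Set Implicit Arguments. Unset Strict Implicit. Unset Printing Implicit Defensive.

Section Tree.
Variables (T : finType) (e : rel T).
Hypothesis esym : symmetric e.
Hypothesis eirr : irreflexive e.
Hypothesis conn : forall x y, connect e x y.
Hypothesis acyc : ~ (exists c : seq T, [&& uniq c, 2 < size c & cycle e c]).
Implicit Types (S U W : {set T}) (M : {set {set T}}).
Local Notation nuS := (nuS e).
Local Notation inD := (inD e).
Local Notation matchIn := (matchIn e).
Local Notation bridge := (bridge e).
Local Notation eS := (eS e).

Definition Br a x := [set z | connect (eS (~: [set a])) x z].

Lemma Br_refl a x : x \in Br a x.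
Proof. by rewrite inE connect0. Qed.

Lemma Br_notin a x : x != a -> a \notin Br a x.
Proof.
move=> xa; rewrite inE; apply/negP => /(connect_eS_in (S := ~: [set a])).
by rewrite !inE xa eqxx => /(_ isT).
Qed.

Lemma Br_in a x z : x != a -> z \in Br a x -> z != a.
Proof.
by move=> xa; rewrite inE => /(connect_eS_in (S := ~: [set a])); rewrite !inE xa => /(_ isT).
Qed.

Lemma Br_disj a x y : e a x -> e a y -> x != y -> [disjoint Br a x & Br a y].
Proof.
move=> eax eay xy; apply/pred0P => z /=; apply/negP => /andP[]; rewrite !inE => cx cy.
have := TL esym eirr acyc eax eay xy; rewrite (connect_trans cx) //.
by rewrite eS_csym.
Qed.

Lemma neq_of_e x y : e x y -> x != y.
Proof. by move=> exy; apply/eqP => xy; move: exy; rewrite xy eirr. Qed.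

Lemma edge_bridge x a : e x a -> bridge (Br a x) (~: Br a x) x a.
Proof.
move=> exa; have xa := neq_of_e exa; split.
- by rewrite disjoint_sym; apply/pred0P => z /=; rewrite !inE andNb.
- exact: Br_refl.
- by rewrite inE Br_notin.
- exact: exa.
- move=> z w zB; rewrite inE => wB ezw.
  have za := Br_in xa zB.
  have wa : w = a.
    apply/eqP; apply: contraNT wB => wa; move: zB; rewrite !inE => czx.
    apply: connect_trans czx (connect1 _); by rewrite /P1.eS !inE za wa ezw.
  subst w; split => //; apply/eqP; apply: contraT => zx.
  have eaz : e a z by rewrite esym.
  have eax : e a x by rewrite esym.
  have xz : x != z by rewrite eq_sym.
  have := TL esym eirr acyc eax eaz xz.
  by move: zB; rewrite inE => ->.
Qed.

Lemma setUCT S : S :|: ~: S = setT.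
Proof. by apply/setP => z; rewrite !inE orbN. Qed.

Lemma bridge_restr S1 S2 S2' x y : bridge S1 S2 x y -> S2' \subset S2 -> y \in S2' ->
  bridge S1 S2' x y.
Proof.
case=> d xS yS exy h sS yS'; split => //.
- by apply: disjointWr sS _.
- by move=> z w zS wS; apply: h => //; apply: (subsetP sS).
Qed.

Lemma nu_nuS : nu e = nuS setT.
Proof. by apply: eq_bigl => M; rewrite /P2.matchIn subsetT andbT. Qed.

Lemma GE_D_inD x : (x \in GE_D e) = inD setT x.
Proof.
rewrite /inD in_setT /= inE; apply/existsP/idP.
  case=> M /andP[/andP[mM /eqP cM] nx]; rewrite -nu_nuS -cM eqn_leq.
  apply/andP; split; first by rewrite cM nu_nuS; apply: nuS_mono; exact: subsetDl.
  apply: nuS_ge.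
  rewrite /P2.matchIn mM /=; apply/subsetP => z zc; rewrite !inE andbT.
  by apply: contraNneq nx => <-.
move=> /eqP h; have [M [/andP[mM cM] eM]] := nuS_wit e (setT :\ x).
exists M; rewrite /max_matching mM /= eM h -nu_nuS eqxx /=.
by apply/negP => /(subsetP cM); rewrite !inE eqxx.
Qed.

Lemma notD_covered x M : x \notin GE_D e -> max_matching e M -> x \in cover M.
Proof.
move=> nD mM; apply: contraR nD => nx; rewrite inE; apply/existsP; exists M.
by rewrite mM.
Qed.

Lemma G1 x y : x \in GE_D e -> y \in GE_D e -> e x y -> False.
Proof.
rewrite !GE_D_inD => dx dy exy.
have B := edge_bridge exy.
have := bridge_inD esym eirr B; rewrite setUCT => h; move: dx; rewrite h => /andP[_ ny].
have := bridge_inD esym eirr (bridge_sym esym B); rewrite setUC setUCT => h'.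
by move: dy; rewrite h' => /andP[d2 _]; rewrite d2 in ny.
Qed.

Lemma set2_edge a b u v : [set a; b] = [set u; v] -> u != v -> e u v -> e a b.
Proof.
move=> E uv euv.
have au : a \in [set u; v] by rewrite -E !inE eqxx.
have bu : b \in [set u; v] by rewrite -E !inE eqxx orbT.
have ua : u \in [set a; b] by rewrite E !inE eqxx.
have va : v \in [set a; b] by rewrite E !inE eqxx orbT.
move: au bu ua va; rewrite !inE.
by case/orP => /eqP -> ; case/orP => /eqP ->; rewrite ?eqxx ?(negbTE uv) //= ?(eq_sym v u) ?(negbTE uv) // esym.
Qed.

Lemma M_edge M a b : matching e M -> [set a; b] \in M -> e a b.
Proof.
move=> m abM; have [u [v [euv uv Euv]]] := blockP eirr m abM.
exact: set2_edge Euv uv euv.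
Qed.

Lemma G2 a b M : a \in GE_A e -> max_matching e M -> [set a; b] \in M -> b \in GE_D e.
Proof.
rewrite in_setD => /andP[naD]; rewrite inE => /exists_inP[x xD exa] mM abM.
have [m /eqP cM] := andP mM.
have eab := M_edge m abM.
case: (eqVneq x b) => [<- //|xb].
have eba : e b a by rewrite esym.
have eax : e a x by rewrite esym.
set Y := Br a b; set X := ~: Y.
have BY : bridge Y X b a := edge_bridge eba.
have BX := bridge_sym esym BY.
have VU : X :|: Y = setT by rewrite setUC setUCT.
have hA := bridge_inD esym eirr BX; rewrite VU in hA.
have hB := bridge_inD esym eirr BY; rewrite setUCT in hB.
rewrite GE_D_inD in naD; rewrite GE_D_inD in xD.
have ndXa : ~~ inD X a.
  set Z := Br a x.
  have BZ : bridge Z (~: Z) x a := edge_bridge exa.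
  have hZ := bridge_inD esym eirr BZ; rewrite setUCT xD in hZ.
  have dZx : inD Z x by move: hZ; case: (inD Z x).
  have ZX : Z \subset X.
    by rewrite /X -disjoints_subset; apply: Br_disj.
  have aXW : a \in X :&: ~: Z.
    rewrite in_setI !in_setC Br_notin ?(neq_of_e eba) //.
    by rewrite Br_notin ?(neq_of_e exa).
  have BZ' := bridge_restr BZ (subsetIr X (~: Z)) aXW.
  have XE : (X :&: ~: Z) :|: Z = X.
    apply/setP => z; rewrite in_setU in_setI in_setC.
    by case: (boolP (z \in Z)) => zZ; rewrite ?andbT ?andbF ?orbT ?orbF // (subsetP ZX _ zZ).
  have := bridge_inD esym eirr (bridge_sym esym BZ'); rewrite XE dZx andbF.
  by move=> ->.
rewrite GE_D_inD hB ndXa andbT; apply: contraT => ndYb.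
have aX : a \in X by rewrite in_setC Br_notin // (neq_of_e eba).
have bY : b \in Y by apply: Br_refl.
have mM' : matchIn (X :|: Y) M by rewrite /P2.matchIn m VU subsetT.
have h1 := bridge_M esym eirr BX mM' abM.
have h2 := bridge_nu esym eirr BX; rewrite VU (negbTE ndXa) /= in h2.
have h3 := inD_notin aX ndXa.
have h4 := inD_notin bY ndYb.
move: h1 h2 h3 h4; rewrite cM nu_nuS.
move: (nuS setT) (nuS X) (nuS Y) (nuS (X :\ a)) (nuS (Y :\ b)) => n1 n2 n3 n4 n5.
move=> h1 h2 h3 h4; exfalso; clear -h1 h2 h3 h4; lia.
Qed.

End Tree.

End P4.
Import P4.

Module P5.
Set Implicit Arguments. Unset Strict Implicit. Unset Printing Implicit Defensive.

Section Root.
Variables (T : finType) (e : rel T).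
Hypothesis esym : symmetric e.
Hypothesis eirr : irreflexive e.
Hypothesis conn : forall x y, connect e x y.
Hypothesis acyc : ~ (exists c : seq T, [&& uniq c, 2 < size c & cycle e c]).
Implicit Types (S U W : {set T}) (M : {set {set T}}).
Local Notation eS := (eS e).
Local Notation Br := (Br e).

Lemma PL S v r : connect (eS S) v r -> v != r ->
  exists w, [/\ e v w, w \in S & connect (eS (S :\ v)) w r].
Proof.
move=> /upathP[p [pp up lp]] vr; case: p pp up lp => [|w p] /=.
  by move=> _ _ h; move: vr; rewrite h eqxx.
move=> /andP[/and3P[vS wS evw] pp] /andP[vn up] lp; exists w; split => //.
apply/connectP; exists p => //; apply: path_eS_intro.
- by rewrite !inE wS andbT; apply: contraNneq vn => ->; rewrite inE eqxx.
- exact: (sub_path (@eS_sub _ e _) pp).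
- apply/allP => z zp; rewrite !inE.
  have /allP := path_eS_all pp; move=> /(_ z zp) zS; rewrite (zS : z \in S) andbT.
  by apply: contraNneq vn => <-; rewrite inE zp orbT.
Qed.

Lemma DL S a b c : connect (eS S) a b -> a != c ->
  connect (eS (S :\ c)) a b \/ connect (eS S) a c.
Proof.
move=> /connectP[p pp ->]; elim: p a pp => [|d p IH] a /=.
  by move=> _ _; left.
move=> /andP[ead pp] ac; case: (eqVneq d c) => [dc|dc].
  by right; apply: connect1; rewrite -dc.
case: (IH d pp dc) => h.
  left; apply: connect_trans h; apply: connect1.
  by move: ead; rewrite /P1.eS !inE ac dc => /and3P[-> -> ->].
by right; apply: connect_trans h; apply: connect1.
Qed.

Lemma setT_del v : [set: T] :\ v = ~: [set v].
Proof. by apply/setP => z; rewrite !inE andbT. Qed.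

Variable r : T.

Definition par v := odflt v [pick w | e v w && (r \in Br v w)].

Lemma par_spec v : v != r -> e v (par v) /\ r \in Br v (par v).
Proof.
move=> vr; rewrite /par; case: pickP => [w /andP[h1 h2] //|none].
exfalso; have c : connect (eS setT) v r.
  apply: connect_sub (conn v r) => x y exy; apply: connect1; by rewrite /P1.eS !inE.
have [w [evw _ cw]] := PL c vr.
by move: (none w); rewrite evw inE -setT_del cw.
Qed.

Lemma par_uniq v w : v != r -> e v w -> r \in Br v w -> par v = w.
Proof.
move=> vr evw rw; have [ep rp] := par_spec vr.
apply/eqP; apply: contraT => pw.
have := Br_disj esym eirr acyc ep evw pw.
by move/pred0P => /(_ r) /=; rewrite rp rw.
Qed.

Lemma par_child v w : e v w -> w != r -> (v != r -> w != par v) -> par w = v.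
Proof.
move=> evw wr h; apply: par_uniq => //; first by rewrite esym.
case: (eqVneq v r) => [->|vr]; first exact: Br_refl.
have [ep rp] := par_spec vr; have pw := h vr.
move: rp; rewrite inE => rp.
have pv : par v != v by rewrite eq_sym; exact: (neq_of_e eirr ep).
have pw' : par v != w by rewrite eq_sym.
case: (DL rp pw') => c.
  rewrite inE; apply: connect_trans (connect1 _) (connect_mono _ c).
    rewrite /P1.eS !inE ep andbT; apply/andP; split.
      by apply: contraNneq (neq_of_e eirr evw) => ->.
    by rewrite eq_sym.
  by apply/subsetP => z; rewrite !inE => /andP[].
have := TL esym eirr acyc ep evw pw'; by rewrite c.
Qed.

Lemma par_excl v : v != r -> par v != r -> par (par v) != v.
Proof.
move=> vr ur; apply/eqP => h.
have [eu ru] := par_spec ur; rewrite h inE in ru.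
have [w [evw wu cw]] := PL ru vr.
have : par v = w.
  apply: par_uniq => //; rewrite inE; apply: connect_mono cw.
  by apply/subsetP => z; rewrite !inE => /andP[].
by move=> pw; move: wu; rewrite -pw !inE eqxx.
Qed.

Definition fib (Q : {set T}) p := [set q in Q | (q != r) && (par q == p)].

Lemma fib_sub (Q : {set T}) p : p != r -> fib Q p \subset nbhd e p :\ par p.
Proof.
move=> pr; apply/subsetP => q; rewrite !inE => /andP[_ /andP[qr /eqP pq]].
have [eq _] := par_spec qr; rewrite pq in eq.
rewrite esym eq andbT; apply/eqP => qp.
by have := par_excl pr; rewrite -qp pq eqxx => /(_ qr).
Qed.

Lemma fib_full (Q : {set T}) p : p != r -> nbhd e p \subset Q -> fib Q p = nbhd e p :\ par p.
Proof.
move=> pr sQ; apply/eqP; rewrite eqEsubset fib_sub //=.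
apply/subsetP => w; rewrite !inE => /andP[wp epw].
have wQ : w \in Q by apply: (subsetP sQ); rewrite inE.
have wr : w != r.
  apply/eqP => wr; move: wp; rewrite wr (@par_uniq p r) ?eqxx //.
  - by rewrite -wr.
  - exact: Br_refl.
by rewrite wQ wr /=; apply/eqP; apply: par_child => // _.
Qed.

Lemma card_fib (P Q : {set T}) : (forall q, q \in Q -> q != r -> par q \in P) ->
  #|Q :\ r| = \sum_(p in P) #|fib Q p|.
Proof.
move=> h; rewrite -sum1_card.
rewrite (partition_big par (mem P)) /=; last first.
  by move=> q; rewrite !inE => /andP[qr qQ]; apply: h.
apply: eq_bigr => p _; rewrite -sum1_card; apply: eq_bigl => q.
by rewrite !inE andbA (andbC (q != r)).
Qed.

End Root.

End P5.
Import P5.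

Module P6.
Set Implicit Arguments. Unset Strict Implicit. Unset Printing Implicit Defensive.

Section Recog.
Variables (T : finType) (e : rel T).
Hypothesis esym : symmetric e.
Hypothesis eirr : irreflexive e.
Implicit Types (S U W : {set T}) (M : {set {set T}}).

Lemma cover_card M : matching e M -> #|cover M| = 2 * #|M|.
Proof.
move=> m; rewrite mulnC; apply: card_uniform_partition.
  by move=> E EM; have [x [y [_ xy ->]]] := blockP eirr m EM; rewrite cards2 xy.
have [_ t] := matchingP m; rewrite /partition eqxx t /=.
by apply/negP => /(block_n0 eirr m); rewrite eqxx.
Qed.

Lemma block_meet M E E' x : matching e M -> E \in M -> E' \in M -> x \in E -> x \in E' -> E = E'.
Proof.
move=> m EM E'M xE xE'; have [_ /trivIsetP t] := matchingP m.
apply/eqP; apply: contraT => nE; have := t _ _ EM E'M nE.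
by move/pred0P => /(_ x) /=; rewrite xE xE'.
Qed.

Hypothesis conn : forall x y, connect e x y.
Hypothesis acyc : ~ (exists c : seq T, [&& uniq c, 2 < size c & cycle e c]).

Variable P : {set T}.
Hypothesis hbip : forall x y, e x y -> (x \in P) != (y \in P).
Hypothesis hdeg : forall p, p \in P -> deg e p = 3.

Lemma nb_notP p w : p \in P -> w \in nbhd e p -> w \notin P.
Proof. by move=> pP; rewrite inE => /hbip; rewrite pP. Qed.

Lemma nu_leP M : matching e M -> #|M| <= #|P|.
Proof.
move=> m; case: (set_0Vmem M) => [-> | [E0 E0M]]; first by rewrite cards0.
have [x0 _] : exists x0 : T, true.
  by have [u [v _]] := blockP eirr m E0M; exists u.
pose g (E : {set T}) := odflt x0 [pick x in E :&: P].
have gP E : E \in M -> g E \in E :&: P.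
  move=> EM; rewrite /g; case: pickP => [x //|none].
  have [u [v [euv _ Euv]]] := blockP eirr m EM.
  case: (boolP (u \in P)) => uP.
    by move: (none u); rewrite Euv !inE eqxx uP.
  have vP : v \in P by move: (hbip euv); rewrite (negbTE uP); case: (v \in P).
  by move: (none v); rewrite Euv !inE eqxx orbT vP.
rewrite -(card_in_imset (f := g)).
  apply: subset_leq_card; apply/subsetP => _ /imsetP[E EM ->].
  by have := gP E EM; rewrite inE => /andP[].
move=> E E' EM E'M gE; have := gP E EM; have := gP E' E'M; rewrite !inE gE.
by move=> /andP[h1 _] /andP[h2 _]; apply: block_meet m EM E'M h2 h1.
Qed.

Lemma nu_cover M : matching e M -> #|P| <= #|M| -> P \subset cover M.
Proof.
move=> m leM; case: (set_0Vmem M) => [E0 | [E0 E0M]].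
  move: leM; rewrite E0 cards0 leqn0 cards_eq0 => /eqP ->; exact: sub0set.
have [x0 _] : exists x0 : T, true.
  by have [u [v _]] := blockP eirr m E0M; exists u.
pose g (E : {set T}) := odflt x0 [pick x in E :&: P].
have gP E : E \in M -> g E \in E :&: P.
  move=> EM; rewrite /g; case: pickP => [x //|none].
  have [u [v [euv _ Euv]]] := blockP eirr m EM.
  case: (boolP (u \in P)) => uP.
    by move: (none u); rewrite Euv !inE eqxx uP.
  have vP : v \in P by move: (hbip euv); rewrite (negbTE uP); case: (v \in P).
  by move: (none v); rewrite Euv !inE eqxx orbT vP.
have inj : {in M &, injective g}.
  move=> E E' EM E'M gE; have := gP E EM; have := gP E' E'M; rewrite !inE gE.
  by move=> /andP[h1 _] /andP[h2 _]; apply: block_meet m EM E'M h2 h1.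
have sub : g @: M \subset P.
  by apply/subsetP => _ /imsetP[E EM ->]; have := gP E EM; rewrite inE => /andP[].
have eq : g @: M = P.
  apply/eqP; rewrite eqEcard sub /= card_in_imset //.
apply/subsetP => p; rewrite -eq => /imsetP[E EM ->]; apply/bigcupP; exists E => //.
by have := gP E EM; rewrite inE => /andP[].
Qed.

Lemma Dmatch q : q \notin P ->
  exists M, [/\ matching e M, #|M| = #|P| & q \notin cover M].
Proof.
move=> qP.
have pq p : p \in P -> p != q by move=> pP; apply: contraNneq qP => <-.
pose c p := odflt p [pick w in nbhd e p :\ par e q p].
have cF p : p \in P -> c p \in fib e q (~: P) p.
  move=> pP; rewrite (fib_full esym eirr conn acyc (pq p pP)); last first.
    by apply/subsetP => w wN; rewrite inE (nb_notP pP wN).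
  rewrite /c; case: pickP => [w // | none]; exfalso.
  have := cardsD1 (par e q p) (nbhd e p).
  have [ep _] := par_spec conn (pq p pP).
  rewrite inE ep -/(deg e p) hdeg // add1n => /eqP; rewrite eqSS eq_sym => /eqP.
  by rewrite (eq_card0 none).
have cP p : p \in P -> [/\ e p (c p), c p \notin P, c p != q & par e q (c p) = p].
  move=> pP; have := cF p pP; rewrite !inE => /andP[cnP /andP[cq /eqP pc]].
  have [ep _] := par_spec conn cq; rewrite pc in ep.
  by split => //; rewrite esym.
pose M := [set [set p; c p] | p in P].
exists M; split.
- apply: matching_intro.
    by move=> E /imsetP[p pP ->]; exists p, (c p); have [] := cP p pP.
  apply/trivIsetP => E E' /imsetP[p pP ->] /imsetP[p' p'P ->] nE.
  have [ep cnP cq pc] := cP p pP; have [ep' cnP' cq' pc'] := cP p' p'P.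
  have pp' : p != p' by apply: contraNneq nE => ->.
  apply/pred0P => z /=; rewrite !inE.
  apply/negP => /andP[/orP[]/eqP -> /orP[]/eqP].
  + by move=> h; move: pp'; rewrite h eqxx.
  + by move=> h; move: cnP'; rewrite -h pP.
  + by move=> h; move: cnP; rewrite h p'P.
  + by move=> h; move: pp'; rewrite -pc -pc' h eqxx.
- rewrite card_in_imset // => p p' pP p'P h.
  have : p \in [set p'; c p'] by rewrite -h !inE eqxx.
  rewrite !inE => /orP[/eqP //|/eqP h'].
  by have [_ cnP' _ _] := cP p' p'P; move: cnP'; rewrite -h' pP.
- apply/negP => /bigcupP[_ /imsetP[p pP ->]]; rewrite !inE => /orP[]/eqP qe.
  + by move: qP; rewrite qe pP.
  + by have [_ _ cq _] := cP p pP; move: cq; rewrite qe eqxx.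
Qed.

Lemma nb_exists p : p \in P -> exists w, e p w.
Proof.
move=> pP; have : 0 < #|nbhd e p| by rewrite -/(deg e p) hdeg.
by case/card_gt0P => w; rewrite inE => h; exists w.
Qed.

Lemma deg2 r p : p \in P -> p != r -> #|nbhd e p :\ par e r p| = 2.
Proof.
move=> pP pr; have := cardsD1 (par e r p) (nbhd e p).
have [ep _] := par_spec conn pr.
by rewrite inE ep -/(deg e p) hdeg // add1n => /eqP; rewrite eqSS eq_sym => /eqP.
Qed.

Lemma recog (x0 : T) :
  [/\ nu e = #|P|, GE_D e = ~: P, GE_A e = P & #|T| = 3 * #|P| + 1].
Proof.
have [q0 q0P] : exists q0, q0 \notin P.
  case: (boolP (x0 \in P)) => x0P; last by exists x0.
  have [w ew] := nb_exists x0P; exists w; apply: (nb_notP x0P); by rewrite inE.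
have nuP : nu e = #|P|.
  apply/eqP; rewrite eqn_leq; apply/andP; split.
    by apply/bigmax_leqP => M; apply: nu_leP.
  have [M [m cM _]] := Dmatch q0P; rewrite -cM; exact: leq_bigmax_cond.
have GD : GE_D e = ~: P.
  apply/setP => z; rewrite in_setC; case: (boolP (z \in P)) => zP /=.
    apply/negP; rewrite inE => /existsP[M /andP[/andP[m /eqP cM] nz]].
    have := nu_cover m; rewrite cM nuP leqnn => /(_ isT) /subsetP /(_ z zP).
    by rewrite (negbTE nz).
  have [M [m cM nz]] := Dmatch zP; rewrite inE; apply/existsP; exists M.
  by rewrite /max_matching m cM nuP eqxx nz.
split => //.
- apply/setP => z; rewrite in_setD GD in_setC negbK; case: (boolP (z \in P)) => zP //=.
  rewrite inE; apply/exists_inP; have [w ew] := nb_exists zP; exists w.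
  + by rewrite in_setC; apply: (nb_notP zP); rewrite inE.
  + by rewrite esym.
- have hpar : forall q, q \in ~: P -> q != q0 -> par e q0 q \in P.
    move=> q; rewrite in_setC => qP qr; have [ep _] := par_spec conn qr.
    by move: (hbip ep); rewrite (negbTE qP); case: (_ \in P).
  have := card_fib hpar.
  rewrite (eq_bigr (fun _ => 2)); last first.
    move=> p pP; have pr : p != q0 by apply: contraNneq q0P => <-.
    rewrite (fib_full esym eirr conn acyc pr); first exact: deg2.
    by apply/subsetP => w wN; rewrite inE (nb_notP pP wN).
  rewrite sum_nat_const => h.
  have := cardsD1 q0 (~: P); rewrite in_setC q0P h => hc.
  by rewrite -(cardsC P) hc; lia.
Qed.

End Recog.

End P6.
Import P6.

Module P7.
Set Implicit Arguments. Unset Strict Implicit. Unset Printing Implicit Defensive.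

Lemma sum_eq_max (T : finType) (A : {set T}) (f : T -> nat) k :
  (forall a, a \in A -> f a <= k) -> \sum_(a in A) f a = #|A| * k ->
  forall a, a \in A -> f a = k.
Proof.
move=> hf hs a aA; apply/eqP; rewrite eqn_leq hf //=.
move: hs; rewrite (bigD1 a) //= => hs.
have h1 : \sum_(i in A | i != a) f i <= \sum_(i in A | i != a) k.
  by apply: leq_sum => i /andP[iA _]; apply: hf.
have h2 : \sum_(i in A | i != a) k = #|[predD1 A & a]| * k.
  rewrite -sum_nat_const; apply: eq_bigl => i; by rewrite !inE andbC.
have h3 := cardD1 a A; rewrite aA in h3.
rewrite h2 in h1; move: h1 hs h3.
move: (\sum_(i in A | i != a) f i) (#|[predD1 A & a]|) (#|A|) (f a) => s c n fa.
move=> h1 hs h3; clear -h1 hs h3; nia.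
Qed.

Section Struct.
Variables (T : finType) (e : rel T).
Hypothesis hT : in_TT e.

Lemma structure :
  [/\ forall x y, e x y -> (x \in GE_A e) != (y \in GE_A e),
      forall a, a \in GE_A e -> deg e a = 3 &
      GE_D e = ~: GE_A e].
Proof.
have [[esym eirr n0 conn nocyc] degA hnu] := hT.
set A := GE_A e; set D := GE_D e.
have AD : [disjoint A & D].
  by apply/pred0P => z /=; rewrite /A /GE_A in_setD; case: (z \in D); rewrite ?andbF.
have [M [mM' cM]] := nuS_wit e setT.
have m : matching e M by case/andP: mM'.
have cMn : #|M| = nu e by rewrite cM nu_nuS.
have maxM : max_matching e M by rewrite /max_matching m cMn eqxx.
have ccard := cover_card eirr m.
have [r rD] : exists r, r \in D.
  have : #|cover M| < #|T|.
    rewrite ccard cMn; move: hnu n0; move: (nu e) (#|T|) => a b; clear; lia.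
  move=> h; have : 0 < #|~: cover M|.
    move: h; rewrite -(cardsC (cover M)); move: (#|cover M|) (#|~: cover M|) => a b.
    clear; lia.
  move=> /card_gt0P[z].
  rewrite in_setC => nz; exists z; rewrite /D inE; apply/existsP; exists M.
  by rewrite maxM nz.
have covD z : z \notin D -> z \in cover M by move=> nz; exact: (notD_covered nz maxM).
pose mate a := odflt a [pick b | [set a; b] \in M].
have mateM a : a \in cover M -> [set a; mate a] \in M.
  move=> /bigcupP[E EM aE]; rewrite /mate; case: pickP => [b //|none].
  have [u [v [_ _ Euv]]] := blockP eirr m EM.
  move: aE; rewrite Euv !inE => /orP[]/eqP au.
    by move: (none v); rewrite au -Euv EM.
  by move: (none u); rewrite au setUC -Euv EM.
have aAnD a : a \in A -> a \notin D by move=> aA; rewrite (disjointFr AD aA).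
have mateD a : a \in A -> mate a \in D.
  move=> aA; apply: (G2 esym eirr nocyc aA maxM); apply: mateM; apply: covD.
  exact: aAnD.
have mate_ne a : a \in A -> mate a != a.
  by move=> aA; apply: contraNneq (aAnD a aA) => <-; apply: mateD.
have mate_inj : {in A &, injective mate}.
  move=> a a' aA a'A h.
  have h1 := mateM a (covD _ (aAnD a aA)); have h2 := mateM a' (covD _ (aAnD a' a'A)).
  have := block_meet m h1 h2 (_ : mate a \in _) (_ : mate a \in _).
  rewrite !inE eqxx orbT h eqxx orbT => /(_ isT isT) E.
  have : a \in [set a'; mate a'] by rewrite -E !inE eqxx.
  by rewrite !inE -h (eq_sym a (mate a)) (negbTE (mate_ne a aA)) orbF => /eqP.
have cov_ge : #|~: D| + #|A| <= #|cover M|.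
  rewrite -(card_in_imset mate_inj).
  have dj : [disjoint ~: D & mate @: A].
    rewrite disjoint_sym disjoints_subset setCK; apply/subsetP => _ /imsetP[a aA ->].
    exact: mateD.
  have [_ hU] := leq_card_setU (~: D) (mate @: A); rewrite dj in hU; rewrite -(eqP hU).
  apply: subset_leq_card; rewrite subUset; apply/andP; split.
    by apply/subsetP => z; rewrite in_setC => /covD.
  apply/subsetP => _ /imsetP[a aA ->]; apply/bigcupP; exists [set a; mate a].
    by apply: mateM; apply: covD; apply: aAnD.
  by rewrite !inE eqxx orbT.
have nu_ge : #|A| <= #|M|.
  have inj : {in A &, injective (fun a => [set a; mate a])}.
    move=> a a' aA a'A E.
    have : a \in [set a'; mate a'] by rewrite -E !inE eqxx.
    rewrite !inE => /orP[/eqP //|/eqP h].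
    by move: (mateD a' a'A); rewrite -h (negbTE (aAnD a aA)).
  rewrite -(card_in_imset inj); apply: subset_leq_card.
  apply/subsetP => _ /imsetP[a aA ->]; apply: mateM; apply: covD; exact: aAnD.
have hpar : forall d, d \in D -> d != r -> par e r d \in A.
  move=> d dD dr; have [ep _] := par_spec conn dr.
  rewrite /A /GE_A in_setD; apply/andP; split.
    by apply/negP => pD; apply: (G1 esym eirr nocyc dD pD ep).
  by rewrite inE; apply/exists_inP; exists d.
have cf := card_fib hpar.
have ar a : a \in A -> a != r by move=> aA; apply: contraNneq (aAnD a aA) => ->.
have fle a : a \in A -> #|fib e r D a| <= #|nbhd e a :\ par e r a|.
  by move=> aA; apply: subset_leq_card; exact: (fib_sub esym eirr conn nocyc D (ar a aA)).
have nle a : a \in A -> #|nbhd e a :\ par e r a| + 1 = deg e a.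
  move=> aA; have := cardsD1 (par e r a) (nbhd e a).
  have [ep _] := par_spec conn (ar a aA).
  by rewrite inE ep /deg => ->; rewrite addnC.
have f2 a : a \in A -> #|fib e r D a| <= 2.
  move=> aA; have := fle a aA; have := nle a aA; have := degA a aA.
  move: (#|fib e r D a|) (#|nbhd e a :\ par e r a|) (deg e a) => x y z; clear; lia.
have sle : \sum_(a in A) #|fib e r D a| <= #|A| * 2.
  by rewrite -sum_nat_const; apply: leq_sum.
have dcard := cardsD1 r D; rewrite rD in dcard.
have tot := cardsC D.
move: cov_ge; rewrite ccard cMn => cov_ge.
rewrite cMn in nu_ge.
have [hs hA] : \sum_(a in A) #|fib e r D a| = #|A| * 2 /\ #|~: D| = #|A|.
  move: cov_ge nu_ge dcard tot cf sle hnu n0.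
  move: (\sum_(a in A) #|fib e r D a|) (#|A|) (#|D|) (#|~: D|) (#|D :\ r|) (nu e) (#|T|).
  move=> a b c d f g h; clear; lia.
have DA : D = ~: A.
  have sAD : A \subset ~: D by rewrite -disjoints_subset.
  have : A == ~: D by rewrite eqEcard sAD hA leqnn.
  by move/eqP ->; rewrite setCK.
have f2eq := sum_eq_max f2 hs.
have fibE a : a \in A -> fib e r D a = nbhd e a :\ par e r a.
  move=> aA; apply/eqP; rewrite eqEcard (fib_sub esym eirr conn nocyc D (ar a aA)) /= (f2eq a aA).
  have := nle a aA; have := degA a aA; move: (deg e a) (#|nbhd e a :\ par e r a|) => x y.
  clear; lia.
split => //.
- move=> x y exy; case: (boolP (x \in A)) => xA; case: (boolP (y \in A)) => yA //=.
    exfalso; case: (eqVneq y (par e r x)) => [yp | ypx].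
      have xf : x \in fib e r D y.
        rewrite fibE // !inE esym exy andbT yp eq_sym; apply: (par_excl esym eirr conn nocyc); first exact: ar.
        by rewrite -yp; apply: ar.
      by move: xf; rewrite inE => /andP[]; rewrite DA in_setC xA.
    have yf : y \in fib e r D x by rewrite fibE // !inE exy ypx.
    by move: yf; rewrite inE => /andP[]; rewrite DA in_setC yA.
  have xD : x \in D by rewrite DA in_setC xA.
  have yD : y \in D by rewrite DA in_setC yA.
  by case: (G1 esym eirr nocyc xD yD exy).
- move=> a aA; have := nle a aA; rewrite -fibE // (f2eq a aA) => <- //.
Qed.

End Struct.

End P7.
Import P7.

Module P8.
Set Implicit Arguments. Unset Strict Implicit. Unset Printing Implicit Defensive.

Section Contr.
Variables (T : finType) (e : rel T) (X : {set T}).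
Hypothesis esym : symmetric e.
Hypothesis eirr : irreflexive e.
Hypothesis conn : forall x y, connect e x y.
Hypothesis acyc : ~ (exists c : seq T, [&& uniq c, 2 < size c & cycle e c]).
Hypothesis Xconn : forall z z', z \in X -> z' \in X -> connect (eS e X) z z'.
Variable x0 : T.
Hypothesis x0X : x0 \in X.

Local Notation T' := (contr_vert X).
Local Notation e' := (contr_rel e X).
Local Notation proj := (contr_proj X).

Lemma projN x : (proj x == None) = (x \in X).
Proof. by rewrite /contr_proj; case: insubP => [u /negPf -> //| /negPn ->]. Qed.

Lemma projNone x : x \in X -> proj x = None.
Proof. by move=> xX; apply/eqP; rewrite projN. Qed.

Lemma projS x s : proj x = Some s -> val s = x.
Proof. move=> h; have := @insubK _ _ {x : T | x \notin X} x; rewrite /contr_proj in h; by rewrite h. Qed.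

Lemma proj_val (s : T') : forall s' , s = Some s' -> proj (val s') = s.
Proof. by move=> s' ->; rewrite /contr_proj valK. Qed.

Lemma valX (s : {x : T | x \notin X}) : val s \notin X.
Proof. by case: s. Qed.

Lemma e'P a b : reflect (a != b /\ exists x y, [/\ e x y, proj x = a & proj y = b]) (e' a b).
Proof.
rewrite /contr_rel; apply: (iffP andP) => [[ab /existsP[x /existsP[y /and3P[exy /eqP h1 /eqP h2]]]] | [ab [x [y [exy h1 h2]]]]].
  by split => //; exists x, y.
split => //; apply/existsP; exists x; apply/existsP; exists y; by rewrite exy h1 h2 !eqxx.
Qed.

Lemma e'sym : symmetric e'.
Proof.
move=> a b; apply/e'P/e'P => [[ab [x [y [exy h1 h2]]]] | [ab [x [y [exy h1 h2]]]]];
  (split; first by rewrite eq_sym); exists y, x; by rewrite esym.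
Qed.

Lemma e'irr : irreflexive e'.
Proof. by move=> a; apply/e'P => [[]]; rewrite eqxx. Qed.

Lemma e'_proj x y : e x y -> proj x != proj y -> e' (proj x) (proj y).
Proof. by move=> exy ne; apply/e'P; split => //; exists x, y. Qed.

Lemma conn_proj x y : connect e x y -> connect e' (proj x) (proj y).
Proof.
move=> /connectP[p pp ->]; elim: p x pp => [|z p IH] x /=; first by move=> _; exact: connect0.
move=> /andP[exz pp]; apply: connect_trans (IH _ pp).
case: (eqVneq (proj x) (proj z)) => [-> //|ne].
by apply: connect1; apply: e'_proj.
Qed.

Lemma e'conn a b : connect e' a b.
Proof.
have ha (c : T') : exists x, proj x = c.
  case: c => [s|]; first by exists (val s); rewrite /contr_proj valK.
  by exists x0; apply: projNone.
have [x <-] := ha a; have [y <-] := ha b; exact: conn_proj.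
Qed.

Definition lift (a : T') : T := if a is Some s then val s else x0.

Lemma e'_lift (s t : {x : T | x \notin X}) : e' (Some s) (Some t) -> e (val s) (val t).
Proof. by move=> /e'P[_ [x [y [exy /projS -> /projS ->]]]]. Qed.

Lemma path_lift a c : path e' a c -> a != None -> None \notin c -> path e (lift a) (map lift c).
Proof.
elim: c a => [|b c IH] a; first by [].
move=> /= /andP[eab pc] aN; rewrite inE negb_or => /andP[bN cN].
case: a eab aN => [s|] // eab _; case: b eab bN pc IH => [t|] // eab _ pc IH.
by rewrite (e'_lift eab) /=; apply: (IH (Some t)).
Qed.

Lemma lift_inj : {in [pred a : T' | a != None] &, injective lift}.
Proof. by move=> [s|] [t|] //= _ _ /val_inj ->. Qed.

Lemma e'acyc : ~ (exists c : seq T', [&& uniq c, 2 < size c & cycle e' c]).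
Proof.
move=> [c /and3P[uc sc cc]].
case: (boolP (None \in c)) => Nc; last first.
  apply: acyc; exists (map lift c); apply/and3P; split.
  - rewrite map_inj_in_uniq // => a b ac bc; apply: lift_inj; rewrite inE.
    + by apply: contraNneq Nc => <-.
    + by apply: contraNneq Nc => <-.
  - by rewrite size_map.
  - case: c uc sc cc Nc => [|a c] //= uc sc cc Nc.
    rewrite -map_rcons; apply: path_lift cc _ _.
      by apply: contraNneq Nc => <-; rewrite inE eqxx.
    by rewrite mem_rcons inE negb_or; move: Nc; rewrite inE negb_or => /andP[-> ->].
pose i := index None c.
have ic : i < size c by rewrite index_mem.
have c2E : rot i c = None :: (drop i.+1 c ++ take i c).
  by rewrite /rot (drop_nth None ic) nth_index.
have := rot_uniq i c; have := rot_cycle i e' c; have := size_rot i c.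
rewrite c2E uc cc; move: (drop i.+1 c ++ take i c) => s.
move=> ss cs us; rewrite -ss in sc; clear c2E.
move: us => /= /andP[Ns us].
case: s ss sc cs Ns us => [|b [|b2 s]] //= ss sc /andP[eNb cs] Ns us.
set s' := b2 :: s in cs Ns us.
rewrite rcons_path in cs; case/andP: cs => ps elN.
case: b eNb ps elN Ns us => [x1|] eNb ps elN Ns us; last by move: Ns; rewrite inE eqxx.
have lN : last (Some x1) s' != None.
  have : last (Some x1) s' \in s' by rewrite /s' /= mem_last.
  by apply: contraTneq => ->; move: Ns; rewrite inE negb_or => /andP[_].
case E : (last (Some x1) s') lN elN => [xk|] // _ elN.
have ps' : path e' (Some x1) s' by rewrite /s' /= ps; case/andP: elN.
have eL : e' (Some xk) None by rewrite -E /s' /=; case/andP: elN.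
have x1k : x1 != xk.
  apply/eqP => h; move: us => /and3P[h2 _ _].
  have : last (Some x1) s' \in s' by rewrite /s' /= mem_last.
  by rewrite E -h (negbTE h2).
have Nss : None \notin s' by move: Ns; rewrite inE negb_or => /andP[_].
have pl := path_lift ps' isT Nss.
have lE : last (val x1) (map lift s') = val xk.
  by rewrite -[val x1]/(lift (Some x1)) last_map E.
have cW : connect (eS e (~: X)) (val x1) (val xk).
  apply/connectP; exists (map lift s'); last by rewrite lE.
  apply: path_eS_intro => //; first by rewrite in_setC valX.
  apply/allP => z /mapP[a aS ->]; case: a aS => [t|] aS; first by rewrite /= in_setC valX.
  by move: Nss; rewrite aS.
have [p [y [epy /eqP pN /projS yE]]] : exists p y, [/\ e p y, proj p = None & proj y = Some x1].
  by move: eNb => /e'P[_ h].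
have [y' [q [eyq /projS yE' /eqP qN]]] : exists y q, [/\ e y q, proj y = Some xk & proj q = None].
  by move: eL => /e'P[_ h].
rewrite projN in pN; rewrite projN in qN.
have dj : [disjoint X & ~: X] by rewrite disjoints_subset setCK subxx.
have x1W : val x1 \in ~: X by rewrite in_setC valX.
have e1 : e p (val x1) by rewrite yE.
have e2 : e (val xk) q by rewrite yE'.
have [_ h] := GL acyc dj qN x1W (Xconn qN pN) cW e1 e2.
by move: x1k; rewrite (val_inj h) eqxx.
Qed.

Lemma nb_contr (s : {x : T | x \notin X}) :
  nbhd e' (Some s) = proj @: nbhd e (val s).
Proof.
apply/setP => b; rewrite inE; apply/idP/imsetP.
  move=> /e'P[_ [x [y [exy /projS xE yb]]]]; exists y => //; by rewrite inE xE.
move=> [y]; rewrite inE => ey ->.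
have -> : Some s = proj (val s) by rewrite /contr_proj valK.
apply: e'_proj => //; apply/eqP => h.
have hv : proj (val s) = Some s by rewrite /contr_proj valK.
have := projS (etrans (Logic.eq_sym h) hv); move=> yE; by move: ey; rewrite yE eirr.
Qed.

Lemma deg_contr (s : {x : T | x \notin X}) : deg e' (Some s) = deg e (val s).
Proof.
rewrite /deg nb_contr card_in_imset // => y y'; rewrite !inE => ey ey' h.
case E : (proj y) h => [t|] h.
  by rewrite -(projS E) -(projS (Logic.eq_sym h)).
have yX : y \in X by rewrite -projN E.
have y'X : y' \in X by rewrite -projN -h.
have dj : [disjoint X & [set val s]] by rewrite disjoint_sym disjoints1 valX.
have aW : val s \in [set val s] by rewrite set11.
have e1 : e y' (val s) by rewrite esym.
have [h1 _] := GL acyc dj yX aW (Xconn yX y'X) (connect0 _ _) e1 ey.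
by rewrite h1.
Qed.

End Contr.

End P8.
Import P8.


Theorem lemma4 (T : finType) (e : rel T) (v1 v2 u1 u2 u3 u4 u5 : T) :
  in_TT e ->
  v1 \in GE_A e -> v2 \in GE_A e ->
  uniq [:: u1; u2; u3; u4; u5] ->
  nbhd e v1 = [set u1; u2; u5] ->
  nbhd e v2 = [set u3; u4; u5] ->
  let X := [set v1; v2; u1; u2; u3; u4; u5] in
  let e' := contr_rel e X in
  [/\ in_TT e',
      GE_D e' = None |: [set contr_proj X x | x in GE_D e :\: (nbhd e v1 :|: nbhd e v2)] &
      GE_A e' = [set contr_proj X x | x in GE_A e :\: [set v1; v2]]].
Proof.
move=> hT hv1 hv2 hu hN1 hN2 X e'.
have [[esym eirr n0 conn acyc] degA hnu] := hT.
have [bip deg3 DA] := structure hT.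
set A := GE_A e in hv1 hv2 bip deg3 DA *.
have nb1 z : e v1 z = (z \in [set u1; u2; u5]) by rewrite -hN1 inE.
have nb2 z : e v2 z = (z \in [set u3; u4; u5]) by rewrite -hN2 inE.
have e1 : e v1 u1 by rewrite nb1 !inE eqxx.
have e2 : e v1 u2 by rewrite nb1 !inE eqxx orbT.
have e5 : e v1 u5 by rewrite nb1 !inE eqxx !orbT.
have e3 : e v2 u3 by rewrite nb2 !inE eqxx.
have e4 : e v2 u4 by rewrite nb2 !inE eqxx orbT.
have e5' : e v2 u5 by rewrite nb2 !inE eqxx !orbT.
have nA1 z : e v1 z -> z \notin A by move=> h; move: (bip _ _ h); rewrite hv1; case: (z \in A).
have nA2 z : e v2 z -> z \notin A by move=> h; move: (bip _ _ h); rewrite hv2; case: (z \in A).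
have XA x : x \in X -> x \in A -> (x == v1) || (x == v2).
  move=> xX xA; apply: contraTT xA => nv.
  have : x \in [set u1; u2; u5] :|: [set u3; u4; u5].
    by move: xX nv; rewrite !inE; do !case: eqP.
  case/setUP => h; [apply: nA1; by rewrite nb1 | apply: nA2; by rewrite nb2].
have inX : [/\ v1 \in X, v2 \in X, u1 \in X, u2 \in X & [/\ u3 \in X, u4 \in X & u5 \in X]].
  by rewrite !inE !eqxx ?orbT.
have [iv1 iv2 iu1 iu2 [iu3 iu4 iu5]] := inX.
have st x y : x \in X -> y \in X -> e x y -> connect (eS e X) x y.
  by move=> xX yX exy; apply: connect1; rewrite /eS xX yX exy.
have hub z : z \in X -> connect (eS e X) z u5.
  have t1 : connect (eS e X) v1 u5 by apply: st.
  have t2 : connect (eS e X) v2 u5 by apply: st.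
  move=> zX; have : [|| z == v1, z == v2, z == u1, z == u2, z == u3, z == u4 | z == u5].
    by move: zX; rewrite /X !inE -!orbA.
  case/or4P => [/eqP->|/eqP->|/eqP->|/or4P[/eqP->|/eqP->|/eqP->|/eqP->]] //.
  - by apply: connect_trans t1; apply: st; rewrite // esym.
  - by apply: connect_trans t1; apply: st; rewrite // esym.
  - by apply: connect_trans t2; apply: st; rewrite // esym.
  - by apply: connect_trans t2; apply: st; rewrite // esym.
have Xconn z z' : z \in X -> z' \in X -> connect (eS e X) z z'.
  by move=> zX z'X; apply: connect_trans (hub z zX) _; rewrite eS_csym //; apply: hub.
have xout x y : x \in X -> y \notin X -> e x y -> x \notin A.
  move=> xX yX exy; apply/negP => xA; case/orP: (XA x xX xA) => /eqP xv; move: exy; rewrite xv.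
  - by rewrite nb1 => h; move: yX; rewrite /X !inE; move: h; rewrite !inE; do !case: eqP.
  - by rewrite nb2 => h; move: yX; rewrite /X !inE; move: h; rewrite !inE; do !case: eqP.
set P' := [set contr_proj X x | x in A :\: [set v1; v2]].
have memP' (a : contr_vert X) : (a \in P') = (if a is Some s then val s \in A else false).
  apply/imsetP/idP.
    move=> [x]; rewrite in_setD in_set2 negb_or => /andP[/andP[xv1 xv2] xA] ->.
    have xX : x \notin X by apply/negP => xX; move: (XA x xX xA); rewrite (negbTE xv1) (negbTE xv2).
    case E : (contr_proj X x) => [s|]; first by rewrite (projS E).
    by move: xX; rewrite -projN E.
  case: a => [s|] // sA; exists (val s); last by rewrite /contr_proj valK.
  rewrite in_setD in_set2 sA andbT; have := valX s; apply: contraNT; rewrite negbK.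
  by case/orP => /eqP ->.
have hbip : forall a b, e' a b -> (a \in P') != (b \in P').
  move=> a b /e'P[ab [x [y [exy ha hb]]]]; rewrite !memP'.
  case: a ab ha => [s|] ab ha; case: b ab hb => [t|] ab hb //.
  - by rewrite (projS ha) (projS hb); apply: bip.
  - have yX : y \in X by rewrite -projN hb.
    have xX : x \notin X by rewrite -projN ha.
    rewrite (projS ha); have := xout y x yX xX; rewrite esym => /(_ exy) yA.
    by move: (bip _ _ exy); rewrite (negbTE yA); case: (x \in A).
  - have xX : x \in X by rewrite -projN ha.
    have yX : y \notin X by rewrite -projN hb.
    rewrite (projS hb); have := xout x y xX yX exy => xA.
    by move: (bip _ _ exy); rewrite (negbTE xA); case: (y \in A).
have hdeg : forall p, p \in P' -> deg e' p = 3.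
  move=> [s|]; rewrite memP' // => sA.
  by rewrite (deg_contr esym eirr acyc Xconn s); apply: deg3.
have e'sy : symmetric e' := e'sym esym.
have e'ir : irreflexive e' := @e'irr _ e X.
have e'cn : forall a b, connect e' a b := e'conn conn iv1.
have e'ac := @e'acyc _ e X acyc Xconn v1.
have [nuE GD GA card'] := recog e'sy e'ir e'cn e'ac hbip hdeg None.
split.
- split; first split => //.
  + by apply/card_gt0P; exists None.
  + by move=> v; rewrite GA => /hdeg ->.
  + by rewrite nuE card' mulnC; move: (#|P'|) => k; clear; lia.
- rewrite GD; apply/setP => a; rewrite in_setC memP' in_setU1.
  case: a => [s|] //=.
  apply/idP/imsetP.
    move=> sA; exists (val s); last by rewrite /contr_proj valK.
    rewrite in_setD DA in_setC sA andbT.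
    by apply: contraNN (valX s); rewrite in_setU hN1 hN2 /X !inE; do !case: eqP.
  move=> [x]; rewrite in_setD DA in_setC => /andP[_ xA] E.
  by rewrite (projS (Logic.eq_sym E)).
- exact: GA.
Qed.
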